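(* For every $n\in\mathbb{N}$, every nonempty chain $c_k$ over $[n]$ with complementary chain $c'_{n-k}$, and every formula $\varphi$, the following are derivable in $\mathbf{CPN}_n$: (i) $\vdash_{(n)}\varphi\wedge_{(n)}\neg_{c_k}\varphi\to_{(n)}\perp_{c_k}$; (ii) $\vdash_{(n)}\perp_{c'_{n-k}}\to_{(n)}\varphi\vee_{(n)}\neg_{c_k}\varphi$; (iii) $\vdash_{(n)}\neg_{c_k}\varphi\to_{(n)}(\perp_{c_k}\to_{(n)}\varphi)$; (iv) $\vdash_{(n)}\neg_{c_k}\varphi\to_{(n)}(\perp_{c'_{n-k}}\to_{(n)}\neg_{(n)}\varphi)$; (v) $\vdash_{(n)}\neg_{c_k}\varphi\to_{(n)}(\varphi\leftrightarrow_{(n)}\perp_{c_k})$; (vi) $\vdash_{(n)}\neg_{c_k}\varphi\wedge_{(n)}\neg_{c'_{n-k}}\varphi\to_{(n)}\perp_{(n)}$; (vii) $\vdash_{(n)}\perp_{c_k}\wedge_{(n)}\perp_{c'_{n-k}}\to_{(n)}\perp_{(n)}$.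
   Context: Fix $n\in\mathbb{N}$, $n\ge 1$, and write $[n]=\{1,\dots,n\}$. Chains: a chain over $[n]$ is a finite sequence of distinct elements of $[n]$; chains with the same length and the same symbols are identified, so a chain is effectively a subset of $[n]$. $c_k$ denotes a chain with $k$ symbols, $\epsilon$ the empty chain, and $(n)$ the chain consisting of all symbols of $[n]$. For chains $c,d$: the concatenation $c\cdot d$ is the chain of symbols occurring in $c$ or in $d$; the coconcatenation $c\otimes d$ is the chain of symbols occurring in exactly one of $c,d$; $d$ is a subchain of $c$ if every symbol of $d$ is a symbol of $c$. The complementary chain $c'_{n-k}$ of $c_k$ is the chain of the symbols of $[n]$ not occurring in $c_k$. Language of $\mathbf{CPN}_n$: a countable set $P_n$ of propositional letters; constants $\perp_c$ for each chain $c$ over $[n]$ with $1\le |c|\le n-1$, and constants $\perp_{(n)}$ (contradiction) and $\top_{(n)}$ (truth); a unary connective $\neg_c$ for each nonempty chain $c$ over $[n]$ ($\neg_{(n)}$ is the strong negation; the $\neg_c$ with $|c|\le n-1$ are weak negations); a binary connective $\to_{(n)}$. Formulas: propositional letters and constants are formulas; if $\varphi,\psi$ are formulas then so are $\neg_c\varphi$ and $(\varphi\to_{(n)}\psi)$. Conventions: $\neg_\epsilon\varphi:=\varphi$, $\perp_\epsilon:=\top_{(n)}$, and $\perp_c$ for $c=(n)$ means $\perp_{(n)}$. Abbreviations: $\varphi\wedge_{(n)}\psi:=\neg_{(n)}(\varphi\to_{(n)}\neg_{(n)}\psi)$, $\varphi\vee_{(n)}\psi:=\neg_{(n)}\varphi\to_{(n)}\psi$,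 $\varphi\leftrightarrow_{(n)}\psi:=(\varphi\to_{(n)}\psi)\wedge_{(n)}(\psi\to_{(n)}\varphi)$. Axioms of $\mathbf{CPN}_n$, for all formulas $\varphi,\psi,\chi$ and all nonempty chains $c_k,c_r$ over $[n]$: (A1) $\varphi\to_{(n)}(\psi\to_{(n)}\varphi)$; (A2) $(\varphi\to_{(n)}(\psi\to_{(n)}\chi))\to_{(n)}((\varphi\to_{(n)}\psi)\to_{(n)}(\varphi\to_{(n)}\chi))$; (A3) $(\neg_{(n)}\psi\to_{(n)}\neg_{(n)}\varphi)\to_{(n)}((\neg_{(n)}\psi\to_{(n)}\varphi)\to_{(n)}\psi)$; (A4) $\varphi\to_{(n)}(\perp_{c_k}\to_{(n)}\neg_{c_k}\varphi)$; (A5) $\neg_{c_k}\neg_{c_r}\varphi\leftrightarrow_{(n)}\neg_{c_k\otimes c_r}\varphi$; (A6) $\neg_{c_k}\perp_{c_r}\leftrightarrow_{(n)}\perp_{c_k\otimes c_r}$; (A7) $\perp_{c_k}\to_{(n)}\perp_{c_r}$, whenever $c_r$ is a subchain of $c_k$. The only rule of inference is modus ponens (from $\varphi$ and $\varphi\to_{(n)}\psi$ infer $\psi$). For a set $\Sigma$ of formulas, $\Sigma\vdash_{(n)}\varphi$ means there is a finite sequence of formulas ending with $\varphi$, each of which is an axiom, a member of $\Sigma$, or obtained from two earlier members by modus ponens; $\vdash_{(n)}\varphi$ means $\emptyset\vdash_{(n)}\varphi$. *)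

(* Defs.v *)
(* Chains over [n] are sets of symbols; [n] is modelled by 'I_n. *)
From mathcomp Require Import all_boot.
Set Implicit Arguments.
Unset Strict Implicit.
Unset Printing Implicit Defensive.

Section CPN.
Variable n : nat.

Definition chain := {set 'I_n}.
Definition nechain := {c : chain | c != set0}.

(* Constants: [Bot c] for every chain c; [Bot set0] is top_(n) (= bot_eps by
   convention), [Bot setT] is bot_(n), and the others are bot_c with
   1 <= |c| <= n-1.  Negations are indexed by nonempty chains. *)
Inductive form : Type :=
| Var : nat -> form
| Bot : chain -> form
| Neg : nechain -> form -> form
| Imp : form -> form -> form.

Definition full : chain := setT.
Definition topF : form := Bot set0.
Definition botF : form := Bot full.

(* neg_c with the convention neg_eps phi := phi *)
Definition negc (c : chain) (phi : form) : form :=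
  match insub c with Some c' => Neg c' phi | None => phi end.

Definition sneg (phi : form) : form := negc full phi.
Definition andF (phi psi : form) : form := sneg (Imp phi (sneg psi)).
Definition orF (phi psi : form) : form := Imp (sneg phi) psi.
Definition iffF (phi psi : form) : form := andF (Imp phi psi) (Imp psi phi).

Definition cocat (c d : chain) : chain := (c :\: d) :|: (d :\: c).
Definition compl (c : chain) : chain := ~: c.

Inductive deriv (Sigma : form -> Prop) : form -> Prop :=
| A1 phi psi : deriv Sigma (Imp phi (Imp psi phi))
| A2 phi psi chi : deriv Sigma
    (Imp (Imp phi (Imp psi chi)) (Imp (Imp phi psi) (Imp phi chi)))
| A3 phi psi : deriv Sigma
    (Imp (Imp (sneg psi) (sneg phi)) (Imp (Imp (sneg psi) phi) psi))
| A4 phi (ck : chain) : ck != set0 ->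
    deriv Sigma (Imp phi (Imp (Bot ck) (negc ck phi)))
| A5 phi (ck cr : chain) : ck != set0 -> cr != set0 ->
    deriv Sigma (iffF (negc ck (negc cr phi)) (negc (cocat ck cr) phi))
| A6 (ck cr : chain) : ck != set0 -> cr != set0 ->
    deriv Sigma (iffF (negc ck (Bot cr)) (Bot (cocat ck cr)))
| A7 (ck cr : chain) : ck != set0 -> cr != set0 -> cr \subset ck ->
    deriv Sigma (Imp (Bot ck) (Bot cr))
| Hyp phi : Sigma phi -> deriv Sigma phi
| MP phi psi : deriv Sigma phi -> deriv Sigma (Imp phi psi) -> deriv Sigma psi.

Definition provable (phi : form) : Prop := deriv (fun _ => False) phi.

End CPN.

(* Main.v *)
Require Import Defs.
From mathcomp Require Import all_boot.
Set Implicit Arguments.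
Unset Strict Implicit.

Section Aux.
Variable n : nat.
Implicit Types (S : form n -> Prop) (a b c : form n).

Definition ext S a := fun x => S x \/ x = a.

Lemma weaken S S' a : (forall x, S x -> S' x) -> deriv S a -> deriv S' a.
Proof.
move=> H D; elim: D.
- move=> *; exact: A1.
- move=> *; exact: A2.
- move=> *; exact: A3.
- move=> p c Hc; exact: A4.
- move=> p c r Hc Hr; exact: A5.
- move=> c r Hc Hr; exact: A6.
- move=> c r Hc Hr Hs; exact: A7.
- by move=> x Hx; apply: Hyp; apply: H.
- move=> x y _ H1 _ H2; exact: MP H1 H2.
Qed.

Lemma lift S a b : deriv S b -> deriv (ext S a) b.
Proof. by apply: weaken => x Hx; left. Qed.

Lemma hyp S a : deriv (ext S a) a.
Proof. by apply: Hyp; right. Qed.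

Lemma Iden S a : deriv S (Imp a a).
Proof.
apply: (MP (A1 _ a a)).
apply: (MP (A1 _ a (Imp a a))).
exact: A2.
Qed.

Lemma DT S a b : deriv (ext S a) b -> deriv S (Imp a b).
Proof.
elim=> {b}.
- move=> *; apply: MP (A1 _ _ _); exact: A1.
- move=> *; apply: MP (A1 _ _ _); exact: A2.
- move=> *; apply: MP (A1 _ _ _); exact: A3.
- move=> p c Hc; apply: MP (A1 _ _ _); exact: A4.
- move=> p c r Hc Hr; apply: MP (A1 _ _ _); exact: A5.
- move=> c r Hc Hr; apply: MP (A1 _ _ _); exact: A6.
- move=> c r Hc Hr Hs; apply: MP (A1 _ _ _); exact: A7.
- move=> x [Hx|->]; last exact: Iden.
  by apply: MP (A1 _ _ _); apply: Hyp.
- move=> x y _ H1 _ H2.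
  apply: MP H1 _; apply: MP H2 _; exact: A2.
Qed.

Lemma MP' S a b : deriv S (Imp a b) -> deriv S a -> deriv S b.
Proof. by move=> H1 H2; apply: MP H2 H1. Qed.

Lemma RAA S a b :
  deriv (ext S (sneg a)) b -> deriv (ext S (sneg a)) (sneg b) -> deriv S a.
Proof.
move=> H1 H2; apply: (MP (DT H1)); apply: (MP (DT H2)); exact: A3.
Qed.

Lemma exfalso S a b : deriv S a -> deriv S (sneg a) -> deriv S b.
Proof. by move=> H1 H2; apply: (@RAA _ _ a); apply: lift. Qed.

Lemma dne S a : deriv S (sneg (sneg a)) -> deriv S a.
Proof. by move=> H; apply: (RAA (b:=(sneg a))); [apply: hyp|apply: lift]. Qed.

Lemma andE1 S a b : deriv S (andF a b) -> deriv S a.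
Proof.
move=> H; apply: (RAA (b:=(Imp a (sneg b)))); last by apply: lift.
apply: DT; apply: (exfalso (a:=a)); [apply: hyp | apply: lift; apply: hyp].
Qed.

Lemma andE2 S a b : deriv S (andF a b) -> deriv S b.
Proof.
move=> H; apply: (RAA (b:=(Imp a (sneg b)))); last by apply: lift.
apply: MP' (A1 _ (sneg b) a) (@hyp S (sneg b)).
Qed.

Lemma andI S a b : deriv S a -> deriv S b -> deriv S (andF a b).
Proof.
move=> Ha Hb; apply: (RAA (b:=b)); last first.
  exact: MP' (@dne _ (Imp a (sneg b)) (@hyp S (sneg (andF a b)))) (@lift S (sneg (andF a b)) a Ha).
by apply: lift.
Qed.

Lemma iffE1 S a b : deriv S (iffF a b) -> deriv S a -> deriv S b.
Proof. by move=> H; apply: MP'; apply: andE1 H. Qed.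

Lemma iffE2 S a b : deriv S (iffF a b) -> deriv S b -> deriv S a.
Proof. by move=> H; apply: MP'; apply: andE2 H. Qed.

Lemma negc0 a : negc (set0 : chain n) a = a.
Proof. by rewrite /negc insubN // eqxx. Qed.

Lemma A4' S (d : chain n) a : deriv S (Imp a (Imp (Bot d) (negc d a))).
Proof.
have [->|nz] := eqVneq d set0; last exact: A4.
rewrite negc0; exact: A1.
Qed.

Lemma iffrefl S a : deriv S (iffF a a).
Proof. by apply: andI; apply: Iden. Qed.

Lemma A5' S (d r : chain n) a :
  deriv S (iffF (negc d (negc r a)) (negc (cocat d r) a)).
Proof.
have [->|nzd] := eqVneq d set0.
  have -> : cocat set0 r = r by apply/setP=> x; rewrite !inE; case: (x \in r).
  rewrite negc0; exact: iffrefl.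
have [->|nzr] := eqVneq r set0.
  have -> : cocat d set0 = d by apply/setP=> x; rewrite !inE; case: (x \in d).
  rewrite negc0; exact: iffrefl.
exact: A5.
Qed.

End Aux.
Arguments hyp {n S a}.
Arguments lift {n S a b}.
Arguments A4' {n S d a}.


Theorem mainTheorem5 (n : nat) (ck : {set 'I_n}) (phi : form n) :
  ck != set0 ->
  let ck' := compl ck in
  provable (Imp (andF phi (negc ck phi)) (Bot ck)) /\
  provable (Imp (Bot ck') (orF phi (negc ck phi))) /\
  provable (Imp (negc ck phi) (Imp (Bot ck) phi)) /\
  provable (Imp (negc ck phi) (Imp (Bot ck') (sneg phi))) /\
  provable (Imp (negc ck phi) (iffF phi (Bot ck))) /\
  provable (Imp (andF (negc ck phi) (negc ck' phi)) (botF n)) /\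
  provable (Imp (andF (Bot ck) (Bot ck')) (botF n)).
Proof.
move=> nz ck'.
have nzT : (full n) != set0.
  case/set0Pn: nz => x _; apply/set0Pn; exists x; by rewrite inE.
have cT : cocat (full n) ck = ck'
  by apply/setP=> x; rewrite /ck' /compl !inE; case: (x \in ck).
have c'c : cocat ck' ck = full n
  by apply/setP=> x; rewrite /ck' /compl !inE; case: (x \in ck).
have c'T : cocat ck' (full n) = ck
  by apply/setP=> x; rewrite /ck' /compl !inE; case: (x \in ck).
have cc : cocat ck ck = set0
  by apply/setP=> x; rewrite !inE; case: (x \in ck).
have A6c S : deriv S (iffF (sneg (Bot ck)) (Bot ck')).
  rewrite -cT; exact: A6.
have A5c S : deriv S (iffF (sneg (negc ck phi)) (negc ck' phi)).
  rewrite -cT; exact: A5'.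
have i1 : provable (Imp (andF phi (negc ck phi)) (Bot ck)).
  apply: DT; set S := ext _ _.
  have Hp : deriv S phi by apply: (andE1 (@hyp _ _ (andF phi (negc ck phi)))).
  have Hn : deriv S (negc ck phi) by apply: (andE2 (@hyp _ _ (andF phi (negc ck phi)))).
  apply: (RAA (b:=negc ck phi)); first by apply: lift.
  set S2 := ext S _.
  have Hb : deriv S2 (Bot ck') := iffE1 (A6c S2) (@hyp _ S (sneg (Bot ck))).
  have H4 : deriv S2 (negc ck' phi) :=
     MP' (MP' (@A4' _ S2 ck' phi) (lift Hp)) Hb.
  exact: (iffE2 (A5c S2) H4).
have i3 : provable (Imp (negc ck phi) (Imp (Bot ck) phi)).
  apply: DT; apply: DT.
  set S := ext (ext _ _) _.
  have := @A5' _ S ck ck phi.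
  rewrite cc negc0 => H; apply: (iffE1 H).
  exact: (MP' (MP' (@A4' _ S ck (negc ck phi)) (lift (@hyp _ _ (negc ck phi))))
        (@hyp _ _ (Bot ck))).
split; first exact: i1.
split.
  apply: DT; apply: DT.
  set S := ext (ext _ _) _.
  have := @A5' _ S ck' (full n) phi.
  rewrite c'T => H; apply: (iffE1 H).
  exact: (MP' (MP' (@A4' _ S ck' (sneg phi)) (@hyp _ _ (sneg phi)))
        (lift (@hyp _ _ (Bot ck')))).
split; first exact: i3.
split.
  apply: DT; apply: DT.
  set S := ext (ext _ _) _.
  have := @A5' _ S ck' ck phi.
  rewrite c'c => H; apply: (iffE1 H).
  exact: (MP' (MP' (@A4' _ S ck' (negc ck phi)) (lift (@hyp _ _ (negc ck phi))))
        (@hyp _ _ (Bot ck'))).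
split.
  apply: DT; set S := ext _ _; apply: andI.
    apply: DT; set S2 := ext S _.
    apply: (MP' (weaken (S':=S2) _ i1)); first by [].
    apply: andI; first exact: (@hyp _ _ phi).
    exact: (lift (@hyp _ _ (negc ck phi))).
  exact: (MP' (weaken (S':=S) _ i3) (@hyp _ _ (negc ck phi))).
split.
  apply: DT; set S := ext _ _.
  have H := @hyp _ (fun _ => False) (andF (negc ck phi) (negc ck' phi)).
  exact: (exfalso _ (andE1 H) (iffE2 (A5c S) (andE2 H))).
apply: DT; set S := ext _ _.
have H := @hyp _ (fun _ => False) (andF (Bot ck) (Bot ck')).
exact: (exfalso _ (andE1 H) (iffE2 (A6c S) (andE2 H))).
Qed.
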